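(* Let $n,m\in\mathbb N$ and $\tau_{-n+1},\dots,\tau_{n-1}\in M_m(\mathbb C)$, and let $T\in M_n(M_m(\mathbb C))$ be the block Toeplitz matrix whose $(i,j)$ block is $\tau_{i-j}$ ($0\le i,j\le n-1$). The following are equivalent: (1) $T$ is positive semidefinite; (2) for every function $F:S^1\to M_m(\mathbb C)$ of the form $F(z)=\sum_{k=-n+1}^{n-1}a_kz^k$ with $a_k\in M_m(\mathbb C)$ such that $F(z)$ is positive semidefinite for every $z\in S^1$, the matrix $\sum_{k=-n+1}^{n-1}\tau_{-k}\circ a_k$ is positive semidefinite.
   Context: $S^1$ is the unit circle; $a\circ b$ denotes the Schur–Hadamard (entrywise) product of $m\times m$ matrices. *)

(* Defs.v *)
From HB Require Import structures.
From mathcomp Require Import all_boot all_order all_algebra.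
From mathcomp Require Import reals complex.
Set Implicit Arguments. Unset Strict Implicit. Unset Printing Implicit Defensive.
Import Order.TTheory GRing.Theory Num.Theory.
Local Open Scope ring_scope.

Definition adjmx (C : numClosedFieldType) (p q : nat) (A : 'M[C]_(p, q)) : 'M[C]_(q, p) :=
  (map_mx Num.conj A)^T.

Definition psd (C : numClosedFieldType) (p : nat) (A : 'M[C]_p) : Prop :=
  adjmx A = A /\ forall v : 'cV[C]_p, 0 <= (adjmx v *m A *m v) 0 0.

Definition hadamard (C : numClosedFieldType) (p q : nat) (A B : 'M[C]_(p, q)) : 'M[C]_(p, q) :=
  \matrix_(i, j) (A i j * B i j).

(* the index range -n+1, ..., n-1 (empty when n = 0) *)
Definition krange (n : nat) : seq int :=
  [seq (i%:Z - (n%:Z - 1)) | i <- iota 0 (2 * n).-1].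

Definition block_toeplitz (C : numClosedFieldType) (n m : nat) (tau : int -> 'M[C]_m)
  : 'M[C]_(\sum_(i < n) m) :=
  \mxblock_(i < n, j < n) tau (i%:Z - j%:Z).

Definition trig_mxpoly (C : numClosedFieldType) (n m : nat) (a : int -> 'M[C]_m) (z : C)
  : 'M[C]_m :=
  \sum_(k <- krange n) (z ^ k) *: a k.

(* Main.v *)
Require Import Defs.
From HB Require Import structures.
From mathcomp Require Import all_boot all_order all_algebra.
From mathcomp Require Import ring.
Require Import Defs.
From mathcomp Require Import reals complex.
Import Order.TTheory GRing.Theory Num.Theory.
Set Implicit Arguments. Unset Strict Implicit. Unset Printing Implicit Defensive.
Local Open Scope ring_scope.

Section Aux.
Variable C : numClosedFieldType.
Local Open Scope sesquilinear_scope.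

Lemma mul_tC p q r (A : 'M[C]_(p,q)) (B : 'M[C]_(q,r)) :
  (A *m B)^t* = B^t* *m A^t*.
Proof. by rewrite trmx_mul map_mxM. Qed.

Lemma mmt0 p q (M : 'M[C]_(p,q)) : M *m M^t* = 0 -> M = 0.
Proof.
move=> h; apply/matrixP => i j.
have := congr1 (fun X : 'M[C]_p => X i i) h; rewrite !mxE => /psumr_eq0P H.
have H0 : forall k : 'I_q, true -> 0 <= M i k * (M^t*) k i.
  by move=> k _; rewrite !mxE; exact: mul_conjC_ge0.
have := H H0 j isT; rewrite !mxE.
by move=> /eqP; rewrite mul_conjC_eq0 => /eqP.
Qed.

Lemma unitary_compl r N (E : 'M[C]_(r,N)) : E \is unitarymx ->
  exists E' : 'M[C]_(N - r, N), E' \is unitarymx /\ E *m E'^t* = 0.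
Proof.
move=> Eu.
have rk : \rank (orthomx Num.Def.conjC (hermitian1mx N) E) = (N - r)%N.
  by rewrite rank_ortho (mxrank_unitary Eu).
rewrite -rk.
exists (schmidt (row_base (orthomx Num.Def.conjC (hermitian1mx N) E))).
split; first by apply: schmidt_unitarymx; rewrite rank_leq_col.
apply/orthomx1P.
by rewrite orthomx_sym eqmx_schmidt_free ?row_base_free // eq_row_base.
Qed.

Lemma unitary_ext r N (A B : 'M[C]_(r,N)) : A *m A^t* = B *m B^t* ->
  exists U : 'M[C]_N, U \is unitarymx /\ A *m U = B.
Proof.
move=> G.
set E := schmidt (row_base A).
have Eu : E \is unitarymx by apply: schmidt_unitarymx; rewrite rank_leq_col.
have EA : (E :=: A)%MS.
  exact: eqmx_trans (eqmx_schmidt_free (row_base_free A)) (eq_row_base A).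
set K := E *m pinvmx A.
have KA : K *m A = E by rewrite mulmxKpV // EA.
set F := K *m B.
have Fu : F \is unitarymx.
  apply/unitarymxP; rewrite /F mul_tC mulmxA -(mulmxA K) -G mulmxA -mulmxA.
  by rewrite -mul_tC KA; apply/unitarymxP.
set L := A *m pinvmx E.
have LE : L *m E = A by rewrite mulmxKpV // EA.
have BLF : B = L *m F.
  have eM : B - L *m F = (1%:M - L *m K) *m B.
    by rewrite mulmxBl mul1mx /F mulmxA.
  have eA : (1%:M - L *m K) *m A = 0.
    by rewrite mulmxBl mul1mx -mulmxA KA LE subrr.
  apply/eqP; rewrite -subr_eq0; apply/eqP; apply: mmt0.
  rewrite eM mul_tC mulmxA -(mulmxA _ B) -G mulmxA -mulmxA -mul_tC eA.
  by rewrite mul0mx.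
clearbody L F K.
have [E' [E'u EE']] := unitary_compl Eu.
have [F' [F'u FF']] := unitary_compl Fu.
exists (E^t* *m F + E'^t* *m F'); split; last first.
  rewrite -[X in X *m _ = _]LE -mulmxA mulmxDr !mulmxA EE' (unitarymxP Eu).
  by rewrite mul1mx mul0mx addr0 BLF.
have rA : (\rank A <= N)%N by rewrite rank_leq_col.
have Mu : col_mx E E' \is unitarymx.
  apply/unitarymxP; rewrite tr_col_mx map_row_mx mul_col_row.
  rewrite (unitarymxP Eu) (unitarymxP E'u) EE'.
  have -> : E' *m E^t* = 0 by rewrite -[LHS]trmxCK mul_tC trmxCK EE' trmx0 map_mx0.
  by rewrite -scalar_mx_block.
have := mulmxKtV (1%:M : 'M[C]_N) Mu (subnKC rA).
rewrite mul1mx tr_col_mx map_row_mx mul_row_col => HM.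
apply/unitarymxP.
rewrite linearD /= map_mxD !mul_tC !trmxCK mulmxDl !mulmxDr.
rewrite !mulmxA -!(mulmxA _ F) -!(mulmxA _ F').
rewrite (unitarymxP Fu) (unitarymxP F'u) FF'.
have -> : F' *m F^t* = 0 by rewrite -[LHS]trmxCK mul_tC trmxCK FF' trmx0 map_mx0.
by rewrite !mulmx0 !mul0mx addr0 add0r !mulmx1.
Qed.

Lemma adjmxE p q (A : 'M[C]_(p,q)) : adjmx A = A^t*.
Proof. by rewrite /adjmx map_trmx. Qed.

Lemma delta_tC p (i : 'I_p) : (delta_mx i 0 : 'cV[C]_p)^t* = delta_mx 0 i.
Proof.
apply/matrixP => a b; rewrite !mxE conjC_nat.
by rewrite andbC.
Qed.

Lemma psdP p (A : 'M[C]_p) :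
  (forall v : 'cV[C]_p, 0 <= (v^t* *m A *m v) 0 0) -> psd A.
Proof.
move=> H; split; last by move=> v; rewrite adjmxE.
rewrite adjmxE.
pose f (v w : 'cV[C]_p) := (v^t* *m A *m w) 0 0.
have fD1 : forall u v w, f (u + v) w = f u w + f v w.
  by move=> u v w; rewrite /f linearD /= map_mxD !mulmxDl mxE.
have fD2 : forall u v w, f u (v + w) = f u v + f u w.
  by move=> u v w; rewrite /f mulmxDr mxE.
have fZ1 : forall c u w, f (c *: u) w = c^* * f u w.
  by move=> c u w; rewrite /f linearZ /= map_mxZ -!scalemxAl mxE.
have fZ2 : forall c u w, f u (c *: w) = c * f u w.
  by move=> c u w; rewrite /f -scalemxAr mxE.
have qr : forall v, (f v v)^* = f v v by move=> v; apply: geC0_conj; apply: H.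
have hh : forall v w, (f v w + f w v)^* = f v w + f w v.
  move=> v w; have := qr (v + w); rewrite !fD1 !fD2 !rmorphD /= !qr => e.
  apply: (addIr (f v v + f w w)).
  have -> : (f v w)^* + (f w v)^* + (f v v + f w w) =
    f v v + (f v w)^* + ((f w v)^* + f w w) by ring.
  by rewrite e; ring.
have key : forall v w, (f v w)^* = f w v.
  move=> v w.
  have e1 := hh v w; rewrite rmorphD /= in e1.
  have e2 := hh v ('i *: w).
  rewrite fZ1 fZ2 rmorphD /= !rmorphM /= conjCi raddfN /= conjCi opprK in e2.
  have E : ('i *+ 2) * (f v w)^* = ('i *+ 2) * f w v.
    have -> : ('i *+ 2) * (f v w)^* = 'i * ((f v w)^* + (f w v)^*) -
       (- 'i * (f v w)^* + 'i * (f w v)^*) by ring.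
    rewrite e1 e2; ring.
  apply: (mulfI _ E).
  by rewrite mulrn_eq0 negb_or neq0Ci.
apply/matrixP => i j; rewrite !mxE.
have fe : forall a b, f (delta_mx a 0) (delta_mx b 0) = A a b.
  by move=> a b; rewrite /f delta_tC -rowE -colE !mxE.
by rewrite -!fe key.
Qed.

Lemma diag_tC p (d : 'rV[C]_p) : (diag_mx d)^t* = diag_mx (map_mx Num.conj d).
Proof. by rewrite tr_diag_mx map_diag_mx. Qed.

Lemma psd_factor p (T : 'M[C]_p) : psd T -> exists S : 'M[C]_p, T = S^t* *m S.
Proof.
case=> hT pT; rewrite adjmxE in hT.
have Th : T \is hermsymmx by apply/is_hermitianmxP; rewrite expr0 scale1r hT.
have /orthomx_spectralP eT := hermitian_normalmx Th.
move: eT; set P := spectralmx T; set s := spectral_diag T => eT.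
have Pu : P \is unitarymx := spectral_unitarymx T.
rewrite invmx_unitary // in eT.
have PTP : P *m T *m P^t* = diag_mx s.
  rewrite eT !mulmxA (unitarymxP Pu) mul1mx -mulmxA (unitarymxP Pu).
  by rewrite mulmx1.
have s_ge0 : forall l, 0 <= s 0 l.
  move=> l; have := pT (P^t* *m delta_mx l 0).
  rewrite adjmxE mul_tC trmxCK delta_tC.
  have -> : (delta_mx ord0 l : 'rV[C]_p) *m P *m T *m (P^t* *m (delta_mx l ord0 : 'cV[C]_p)) =
     (delta_mx ord0 l : 'rV[C]_p) *m (P *m T *m P^t*) *m (delta_mx l ord0 : 'cV[C]_p).
    by rewrite !mulmxA.
  by rewrite PTP -rowE -colE !mxE eqxx mulr1n.
exists (diag_mx (map_mx sqrtC s) *m P).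
rewrite mul_tC diag_tC -mulmxA (mulmxA (diag_mx _)) mulmx_diag.
rewrite {1}eT -mulmxA; congr (_ *m (_ *m _)); congr diag_mx.
apply/rowP => l; rewrite !mxE geC0_conj ?sqrtC_ge0 // -expr2 sqrtCK.
by [].
Qed.

Lemma submxblock_mul p q k (p_ : 'I_p -> nat) (q_ : 'I_q -> nat)
  (A : 'M[C]_(\sum_i p_ i, k)) (B : 'M[C]_(k, \sum_j q_ j)) i j :
  submxblock (A *m B) i j = submxcol A i *m submxrow B j.
Proof. by rewrite submxblockEh -mul_submxrow submxcol_mul. Qed.

Lemma submxcol_tC p k (p_ : 'I_p -> nat) (S : 'M[C]_(k, \sum_i p_ i)) i :
  submxcol (S^t*) i = (submxrow S i)^t*.
Proof. by apply/matrixP => a b; rewrite !mxE. Qed.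

Lemma mxcol_tC p k (p_ : 'I_p -> nat) (X : forall i, 'M[C]_(p_ i, k)) :
  (\mxcol_i X i)^t* = \mxrow_i (X i)^t*.
Proof. by apply/matrixP => a b; rewrite !mxE. Qed.

Lemma diag_entry p q r (X : 'M[C]_(p,q)) (d : 'rV[C]_q) (Y : 'M[C]_(q,r)) a b :
  (X *m diag_mx d *m Y) a b = \sum_l X a l * d 0 l * Y l b.
Proof. by rewrite mul_mx_diag mxE; apply: eq_bigr => l _; rewrite mxE. Qed.

End Aux.

Section Cara.
Variable C : numClosedFieldType.
Local Open Scope sesquilinear_scope.

Lemma unit_pow (x : C) (i j : nat) : x * x^* = 1 ->
  x ^+ i * (x ^+ j)^* = ((x^*) ^ (j%:Z - i%:Z))%R.
Proof.
move=> h.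
have xc0 : x^* != 0.
  by apply/eqP => e; move: h; rewrite e mulr0 => /eqP; rewrite eq_sym oner_eq0.
have ex : x = (x^*)^-1 by rewrite -[LHS](mulfK xc0) h mul1r.
rewrite rmorphXn /= {1}ex exprVn exprnN.
have -> : (x^* ^+ j = x^* ^ (j%:Z))%R by [].
by rewrite -expfzDr // addrC.
Qed.

Lemma caratheodory n m (tau : int -> 'M[C]_m) :
  psd (block_toeplitz n tau) ->
  exists (L : nat) (V : 'M[C]_(m, L)) (mu : 'I_L -> C),
    (forall l, `|mu l| = 1) /\
    forall i j : 'I_n,
      tau (i%:Z - j%:Z) = V *m diag_mx (\row_l ((mu l) ^ (j%:Z - i%:Z))%R) *m V^t*.
Proof.
move=> /psd_factor [S eS].
pose R (i : 'I_n) := (submxrow S i)^t*.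
have G : forall i j, R i *m (R j)^t* = tau (i%:Z - j%:Z).
  move=> i j; rewrite /R trmxCK -submxcol_tC -submxblock_mul -eS.
  by rewrite /block_toeplitz mxblockK.
case: n tau S eS R G => [|n] tau S eS R G.
  by exists 0%N, 0, (fun _ => 1); split => [l|[]//]; rewrite normr1.
pose Y := \mxcol_(i < n) R (widen_ord (leqnSn n) i).
pose Z := \mxcol_(i < n) R (lift ord0 i).
have YZ : Y *m Y^t* = Z *m Z^t*.
  rewrite /Y /Z !mxcol_tC !mul_mxcol_mxrow; apply: eq_mxblock => i j.
  rewrite !G; congr tau; rewrite /= /bump /= !add1n !intS; ring.
have [U [Uu eU]] := unitary_ext YZ.
have step : forall i : 'I_n, R (widen_ord (leqnSn n) i) *m U = R (lift ord0 i).
  move=> i; have := congr1 (fun M => submxcol M i) eU.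
  by rewrite /Y /Z mxcol_mul !mxcolK.
have UU : U *m U^t* = 1%:M by apply/unitarymxP.
have UU' : U^t* *m U = 1%:M by apply: mulmx1C.
have Un : U \is normalmx by apply/normalmxP; rewrite UU UU'.
have /orthomx_spectralP eU2 := Un.
move: eU2; set Q := spectralmx U; set lam := spectral_diag U => eU2.
have Qu : Q \is unitarymx := spectral_unitarymx U.
rewrite invmx_unitary // in eU2.
have QQ : Q *m Q^t* = 1%:M by apply/unitarymxP.
have QQ' : Q^t* *m Q = 1%:M by apply: mulmx1C.
have DD : diag_mx lam *m (diag_mx lam)^t* = 1%:M.
  have : Q *m (U *m U^t*) *m Q^t* = 1%:M by rewrite UU mulmx1 QQ.
  rewrite eU2 !mul_tC trmxCK !mulmxA !(mulmxtVK _ Qu) QQ mul1mx.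
  by [].
have lam1 : forall l, lam 0 l * (lam 0 l)^* = 1.
  move=> l; have := congr1 (fun M : 'M[C]_(_) => M l l) DD.
  by rewrite diag_tC mulmx_diag !mxE eqxx !mulr1n.
have nlam : forall l, `|(lam 0 l)^*| = 1.
  move=> l; rewrite norm_conjC; have := lam1 l; rewrite -normCK => h.
  by rewrite -[LHS]sqrCK ?normr_ge0 // h sqrtC1.
pose V0 := R ord0 *m Q^t*.
have pow : forall k (hk : (k < n.+1)%N),
    R (Ordinal hk) = V0 *m diag_mx (\row_l lam 0 l ^+ k) *m Q.
  elim=> [|k IH] hk.
    have -> : Ordinal hk = ord0 by apply: val_inj.
    have -> : diag_mx (\row_l lam 0 l ^+ 0) = 1%:M.
      by apply/matrixP => a b; rewrite !mxE expr0.
    by rewrite mulmx1 /V0 mulmxKtV.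
  have hk' : (k < n)%N by [].
  have := step (Ordinal hk').
  have -> : widen_ord (leqnSn n) (Ordinal hk') = Ordinal (ltnW hk) by apply: val_inj.
  have -> : lift ord0 (Ordinal hk') = Ordinal hk by apply: val_inj.
  move=> <-; rewrite IH eU2 !mulmxA (mulmxtVK _ Qu) -(mulmxA V0) mulmx_diag.
  congr (_ *m diag_mx _ *m _); apply/rowP => l; rewrite !mxE exprSr.
  by [].
exists (\sum_(i < n.+1) m)%N, V0, (fun l => (lam 0 l)^*); split => // i j.
have Ri : forall i : 'I_n.+1, R i = V0 *m diag_mx (\row_l lam 0 l ^+ i) *m Q.
  by move=> i'; rewrite -pow; congr R; apply: val_inj.
rewrite -G (Ri i) (Ri j) !mul_tC trmxCK !mulmxA (mulmxtVK _ Qu) -(mulmxA V0).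
rewrite diag_tC mulmx_diag; congr (_ *m diag_mx _ *m _ *m _); apply/rowP => l.
by rewrite !mxE unit_pow.
Qed.

End Cara.

From mathcomp Require Import zify.

Section Krange.

Lemma krange_uniq n : uniq (krange n).
Proof.
rewrite map_inj_uniq ?iota_uniq // => a b /= /addIr [] //.
Qed.

Lemma krange_mem n (i j : 'I_n) : (j%:Z - i%:Z) \in krange n.
Proof.
apply/mapP; exists (j + n.-1 - i)%N.
  rewrite mem_iota add0n; have := ltn_ord i; have := ltn_ord j; lia.
have := ltn_ord i; have := ltn_ord j; lia.
Qed.

Lemma krange_inv n k : k \in krange n -> exists i j : 'I_n, k = j%:Z - i%:Z.
Proof.
case/mapP => t; rewrite mem_iota add0n => /andP [_ ht] ->.
case: (leqP n.-1 t) => h.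
  have hi : (0 < n)%N by lia.
  have hj : (t - n.-1 < n)%N by lia.
  exists (Ordinal hi), (Ordinal hj) => /=; lia.
have hi : (n.-1 - t < n)%N by lia.
have hj : (0 < n)%N by lia.
exists (Ordinal hi), (Ordinal hj) => /=; lia.
Qed.

End Krange.

Section Final.
Variable C : numClosedFieldType.
Local Open Scope sesquilinear_scope.

Lemma krange_reindex n (G : int -> 'I_n -> 'I_n -> C) :
  \sum_(k <- krange n) \sum_(i < n) \sum_(j < n)
     (if j%:Z - i%:Z == k then G k i j else 0) =
  \sum_(i < n) \sum_(j < n) G (j%:Z - i%:Z) i j.
Proof.
rewrite exchange_big; apply: eq_bigr => i _.
rewrite exchange_big; apply: eq_bigr => j _.
rewrite -big_mkcond -big_filter.
have -> : [seq k <- krange n | j%:Z - i%:Z == k] = [:: j%:Z - i%:Z].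
  rewrite (@eq_filter _ _ (pred1 (j%:Z - i%:Z))); last by move=> k; rewrite /= eq_sym.
  by apply: filter_pred1_uniq; [apply: krange_uniq | apply: krange_mem].
by rewrite big_seq1.
Qed.

Lemma bform p (w v : 'cV[C]_p) (M : 'M[C]_p) :
  (w^t* *m M *m v) 0 0 = \sum_q \sum_p0 (w p0 0)^* * M p0 q * v q 0.
Proof.
rewrite mxE; apply: eq_bigr => q _; rewrite mxE big_distrl; apply: eq_bigr => p0 _.
by rewrite !mxE.
Qed.

Lemma qform p (v : 'cV[C]_p) (M : 'M[C]_p) :
  (v^t* *m M *m v) 0 0 = \sum_q \sum_p0 (v p0 0)^* * M p0 q * v q 0.
Proof.
rewrite mxE; apply: eq_bigr => q _; rewrite mxE big_distrl; apply: eq_bigr => p0 _.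
by rewrite !mxE.
Qed.

Lemma pairing n m (tau : int -> 'M[C]_m) (L : nat) (V : 'M[C]_(m, L))
  (mu : 'I_L -> C) (a : int -> 'M[C]_m) :
  (forall l, `|mu l| = 1) ->
  (forall k, k \in krange n -> tau (-k) = V *m diag_mx (\row_l (mu l ^ k)%R) *m V^t*) ->
  (forall z : C, `|z| = 1 -> psd (trig_mxpoly n a z)) ->
  psd (\sum_(k <- krange n) hadamard (tau (-k)) (a k)).
Proof.
move=> hmu H2 H3; apply: psdP => v; rewrite qform.
pose u l := \col_q ((V q l)^* * v q 0) : 'cV[C]_m.
have hl : forall l, 0 <= ((u l)^t* *m trig_mxpoly n a (mu l) *m u l) 0 0.
  by move=> l; have [_ ] := H3 _ (hmu l); move=> /(_ (u l)); rewrite adjmxE.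
have Hk : forall k, k \in krange n -> forall p q,
    tau (-k) p q = \sum_l V p l * (mu l ^ k)%R * (V q l)^*.
  by move=> k hk p q; rewrite H2 // diag_entry; apply: eq_bigr => l _; rewrite !mxE.
have -> : \sum_q \sum_p (v p 0)^* *
    (\sum_(k <- krange n) hadamard (tau (- k)) (a k)) p q * v q 0 =
  \sum_q \sum_p \sum_(k <- krange n) \sum_l
    ((v p 0)^* * (V p l * (mu l ^ k)%R * (V q l)^*) * a k p q * v q 0).
  apply: eq_bigr => q _; apply: eq_bigr => p _.
  rewrite summxE big_distrr big_distrl /=.
  rewrite big_seq [RHS]big_seq; apply: eq_bigr => k hk.
  rewrite !mxE Hk // big_distrl big_distrr big_distrl /=.
  by apply: eq_bigr => l _; ring.
under eq_bigr => q _ do under eq_bigr => p _ do rewrite exchange_big.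
under eq_bigr => q _ do rewrite exchange_big.
rewrite exchange_big; apply: sumr_ge0 => l _.
apply: le_trans (hl l) _; rewrite qform le_eqVlt; apply/orP; left; apply/eqP.
apply: eq_bigr => q _; apply: eq_bigr => p _.
rewrite /trig_mxpoly summxE !mxE big_distrr big_distrl /=.
apply: eq_bigr => k _; rewrite !mxE rmorphM /= conjCK; ring.
Qed.

Lemma converse n m (tau : int -> 'M[C]_m) :
  (forall a : int -> 'M[C]_m,
     (forall z : C, `|z| = 1 -> psd (trig_mxpoly n a z)) ->
     psd (\sum_(k <- krange n) hadamard (tau (- k)) (a k))) ->
  psd (block_toeplitz n tau).
Proof.
move=> H; apply: psdP => x.
pose xs (i : 'I_n) : 'cV[C]_m := submxcol (p_ := fun=> m) x i.
pose a (k : int) : 'M[C]_m := \matrix_(p, q) \sum_(i < n) \sum_(j < n)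
   (if j%:Z - i%:Z == k then (xs i p 0)^* * xs j q 0 else 0).
have Fpsd : forall z : C, `|z| = 1 -> psd (trig_mxpoly n a z).
  move=> z hz.
  have zz : z^* * z^*^* = 1 by rewrite conjCK mulrC -normCK hz expr1n.
  pose y : 'cV[C]_m := \col_p \sum_(i < n) (z ^+ i * xs i p 0)^*.
  have -> : trig_mxpoly n a z = y *m y^t*.
    apply/matrixP => p q; rewrite /trig_mxpoly summxE.
    transitivity (\sum_(k <- krange n) \sum_(i < n) \sum_(j < n)
      (if j%:Z - i%:Z == k then (z ^ k)%R * ((xs i p 0)^* * xs j q 0) else 0)).
      apply: eq_bigr => k _; rewrite !mxE big_distrr; apply: eq_bigr => i _.
      rewrite big_distrr; apply: eq_bigr => j _.
      by case: ifP => _ /=; rewrite ?mulr0.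
    rewrite krange_reindex mxE big_ord1 !mxE rmorph_sum /= big_distrl /=.
    apply: eq_bigr => i _; rewrite big_distrr; apply: eq_bigr => j _ /=.
    rewrite /= conjCK -[X in (X ^ _)%R]conjCK -(unit_pow i j zz) !rmorphM !rmorphXn /= !conjCK.
    ring.
  apply: psdP => v.
  have -> : v^t* *m (y *m y^t*) *m v = (y^t* *m v)^t* *m (y^t* *m v).
    by rewrite mul_tC trmxCK !mulmxA.
  by rewrite mxE big_ord1 !mxE mulrC; apply: mul_conjC_ge0.
have [_ Hf] := H a Fpsd.
have := Hf (const_mx 1); rewrite adjmxE qform => h.
apply: le_trans h _; rewrite le_eqVlt; apply/orP; left; apply/eqP.
transitivity (\sum_(i < n) \sum_(j < n) \sum_q \sum_p
   (xs i p 0)^* * tau (i%:Z - j%:Z) p q * xs j q 0).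
  transitivity (\sum_q \sum_p \sum_(i < n) \sum_(j < n)
     (xs i p 0)^* * tau (i%:Z - j%:Z) p q * xs j q 0).
    apply: eq_bigr => q _; apply: eq_bigr => p _.
    rewrite !mxE conjC1 mul1r mulr1 summxE.
    transitivity (\sum_(k <- krange n) \sum_(i < n) \sum_(j < n)
      (if j%:Z - i%:Z == k then (xs i p 0)^* * tau (- k) p q * xs j q 0 else 0)).
      apply: eq_bigr => k _; rewrite !mxE big_distrr; apply: eq_bigr => i _.
      rewrite big_distrr; apply: eq_bigr => j _.
      by case: ifP => _ /=; [ring | rewrite mulr0].
    by rewrite krange_reindex; apply: eq_bigr => i _; apply: eq_bigr => j _; rewrite opprB.
  under eq_bigr => q _ do rewrite exchange_big.
  under eq_bigr => q _ do under eq_bigr => i _ do rewrite exchange_big.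
  rewrite exchange_big.
  by under eq_bigr => i _ do rewrite exchange_big.
symmetry.
have ex : x = \mxcol_i xs i by rewrite /xs submxcolK.
rewrite ex mxcol_tC /block_toeplitz mul_mxrow_mxblock mul_mxrow_mxcol summxE.
rewrite exchange_big /=; apply: eq_bigr => j _.
rewrite mulmx_suml summxE; apply: eq_bigr => i _.
by rewrite bform.
Qed.

End Final.

Unset Implicit Arguments.

Theorem proposition6p1 (R : realType) (n m : nat) (tau : int -> 'M[R[i]]_m) :
  psd (block_toeplitz n tau) <->
  (forall a : int -> 'M[R[i]]_m,
     (forall z : R[i], `|z| = 1 -> psd (trig_mxpoly n a z)) ->
     psd (\sum_(k <- krange n) hadamard (tau (- k)) (a k))).
Proof.
split.
  move=> hT a ha; have [L [V [mu [hmu hV]]]] := caratheodory hT.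
  apply: (pairing hmu _ ha) => k /krange_inv [i [j ->]].
  by rewrite opprB hV.
exact: converse.
Qed.
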